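(* Let $A\subseteq\Gamma^m$ be a non-empty, non-negative definable set and let $f:A\to\Omega$ be a largely continuous definable map. Then $f$ attains a minimum on $A$.
   Context: $\mathcal{Z}$ is a $\mathbb{Z}$-group (linearly ordered abelian group with smallest positive element $1$ and $|\mathcal{Z}/n\mathcal{Z}|=n$ for all $n\geq1$), $\mathcal{Q}$ its divisible hull, $\Gamma=\mathcal{Z}\cup\{+\infty\}$, $\Omega=\mathcal{Q}\cup\{+\infty\}$. $\Omega$ has the topology generated by open intervals and $]a,+\infty]$ ($a\in\mathcal{Q}$); $\Omega^m$ product topology, $\Gamma^m$ induced; $\overline A$ is the closure in $\Omega^m$. Non-negative: all coordinates $\geq0$. $f$ is largely continuous if it extends to a continuous map on $\overline A$. For $I\subseteq\{1,\dots,m\}$, $F_I(\Gamma^m)$ is the set of points whose coordinates different from $+\infty$ are exactly those indexed by $I$, identified with $\mathcal{Z}^{|I|}$. $A\subseteq\Gamma^m$ is definable if each $A\cap F_I(\Gamma^m)$ is first-order definable with parameters in $\mathcal{Z}$ in the Presburger language $\{0,1,+,\leq,(\equiv_n)_{n\geq1}\}$; $f:A\to\Omega$ is definable if for some integer $n\geq1$, $nf$ takes values in $\Gamma$ and on each $A\cap F_I(\Gamma^m)$, $nf$ is either constantly $+\infty$ or a map into $\mathcal{Z}$ with definable graph. *)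

(* Defs.v *)
From mathcomp Require Import all_boot all_algebra.
Set Implicit Arguments. Unset Strict Implicit. Unset Printing Implicit Defensive.
Import GRing.Theory.
Local Open Scope ring_scope.

Record oagroup (G : zmodType) (le : G -> G -> Prop) : Prop := {
  oa_refl  : forall x, le x x;
  oa_trans : forall x y z, le x y -> le y z -> le x z;
  oa_anti  : forall x y, le x y -> le y x -> x = y;
  oa_total : forall x y, le x y \/ le y x;
  oa_add   : forall x y z, le x y -> le (x + z) (y + z) }.

(* Z is a Z-group with distinguished element one = 1:
   1 is the smallest positive element and |Z/nZ| = n for all n >= 1
   (witnessed by a bijection between 'I_n and Z/nZ). *)
Record zgroup (Z : zmodType) (le : Z -> Z -> Prop) (one : Z) : Prop := {
  zg_oa      : oagroup le;
  zg_one_pos : le 0 one /\ one <> 0;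
  zg_one_min : forall x, le 0 x -> x <> 0 -> le one x;
  zg_quot    : forall n : nat, (0 < n)%N ->
                 exists r : 'I_n -> Z,
                   forall x : Z, exists! i : 'I_n, exists y : Z, x - r i = y *+ n }.

Record divhull (Z : zmodType) (leZ : Z -> Z -> Prop)
               (Q : zmodType) (leQ : Q -> Q -> Prop) (iota : Z -> Q) : Prop := {
  dh_oa   : oagroup leQ;
  dh_add  : forall x y, iota (x + y) = iota x + iota y;
  dh_le   : forall x y, leZ x y <-> leQ (iota x) (iota y);
  dh_div  : forall (q : Q) (n : nat), (0 < n)%N -> exists r : Q, r *+ n = q;
  dh_tors : forall q : Q, exists n : nat, (0 < n)%N /\ exists z : Z, q *+ n = iota z }.

Definition ltrel (T : Type) (le : T -> T -> Prop) (x y : T) := le x y /\ x <> y.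

(* Gamma = option Z and Omega = option Q, with None standing for +infinity. *)
Definition leO (Q : Type) (leQ : Q -> Q -> Prop) (x y : option Q) : Prop :=
  match x, y with
  | _, None => True
  | None, Some _ => False
  | Some a, Some b => leQ a b
  end.

(* Basic open sets of Omega: open intervals ]a,b[ and rays ]a,+oo] (a,b in Q). *)
Inductive basic (Q : Type) := BInt of Q & Q | BRay of Q.

Definition in_basic (Q : Type) (leQ : Q -> Q -> Prop) (B : basic Q) (y : option Q) : Prop :=
  match B, y with
  | BInt a b, Some q => ltrel leQ a q /\ ltrel leQ q b
  | BInt _ _, None => False
  | BRay a, Some q => ltrel leQ a q
  | BRay _, None => True
  end.

Definition in_box (Q : Type) (leQ : Q -> Q -> Prop) (m : nat)
  (U : 'I_m -> basic Q) (y : 'I_m -> option Q) : Prop :=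
  forall i, in_basic leQ (U i) (y i).

Definition embO (Z Q : Type) (iota : Z -> Q) (m : nat) (x : 'I_m -> option Z) :
  'I_m -> option Q := fun i => omap iota (x i).

Definition in_closure (Z Q : Type) (leQ : Q -> Q -> Prop) (iota : Z -> Q) (m : nat)
  (A : ('I_m -> option Z) -> Prop) (y : 'I_m -> option Q) : Prop :=
  forall U : 'I_m -> basic Q, in_box leQ U y ->
    exists x, A x /\ in_box leQ U (embO iota x).

(* f : A -> Omega is largely continuous: it extends to a map on the closure
   of A which is continuous for the subspace topology. *)
Definition largely_continuous (Z Q : Type) (leQ : Q -> Q -> Prop) (iota : Z -> Q)
  (m : nat) (A : ('I_m -> option Z) -> Prop) (f : ('I_m -> option Z) -> option Q) : Prop :=
  exists g : ('I_m -> option Q) -> option Q,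
    (forall x, A x -> g (embO iota x) = f x) /\
    (forall y, in_closure leQ iota A y ->
       forall V : basic Q, in_basic leQ V (g y) ->
       exists U : 'I_m -> basic Q, in_box leQ U y /\
         forall y', in_closure leQ iota A y' -> in_box leQ U y' ->
           in_basic leQ V (g y')).

Inductive pterm (Z : Type) :=
  | PVar of nat | PConst of Z | PZero | POne | PAdd of pterm Z & pterm Z.

Inductive pform (Z : Type) :=
  | PEq of pterm Z & pterm Z
  | PLe of pterm Z & pterm Z
  | PCong of nat & pterm Z & pterm Z
  | PNot of pform Z
  | PAnd of pform Z & pform Z
  | POr of pform Z & pform Z
  | PEx of nat & pform Z
  | PAll of nat & pform Z.

Section PEval.
Variables (Z : zmodType) (le : Z -> Z -> Prop) (one : Z).

Fixpoint teval (e : nat -> Z) (t : pterm Z) : Z :=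
  match t with
  | PVar i => e i
  | PConst c => c
  | PZero => 0
  | POne => one
  | PAdd t u => teval e t + teval e u
  end.

Definition upd (e : nat -> Z) (i : nat) (z : Z) : nat -> Z :=
  fun j => if j == i then z else e j.

Fixpoint peval (e : nat -> Z) (p : pform Z) : Prop :=
  match p with
  | PEq t u => teval e t = teval e u
  | PLe t u => le (teval e t) (teval e u)
  | PCong n t u => exists y : Z, teval e t - teval e u = y *+ n
  | PNot p => ~ peval e p
  | PAnd p q => peval e p /\ peval e q
  | POr p q => peval e p \/ peval e q
  | PEx i p => exists z : Z, peval (upd e i z) p
  | PAll i p => forall z : Z, peval (upd e i z) p
  end.
End PEval.

Definition in_face (Z : Type) (m : nat) (I : {set 'I_m}) (x : 'I_m -> option Z) : Prop :=
  forall i : 'I_m, isSome (x i) = (i \in I).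

(* Assignment of the variables: variable number i < m gets coordinate i of x
   (this identifies F_I(Gamma^m) with Z^I), all other variables get 0. *)
Definition envx (Z : zmodType) (m : nat) (x : 'I_m -> option Z) : nat -> Z :=
  fun j => match @insub nat (fun k => (k < m)%N) 'I_m j with
           | Some i => odflt 0 (x i)
           | None => 0
           end.

Definition definable_set (Z : zmodType) (le : Z -> Z -> Prop) (one : Z) (m : nat)
  (A : ('I_m -> option Z) -> Prop) : Prop :=
  forall I : {set 'I_m}, exists phi : pform Z,
    forall x, in_face I x -> (A x <-> peval le one (envx x) phi).

Definition nmulO (Q : zmodType) (n : nat) (y : option Q) : option Q := omap (fun q => q *+ n) y.

(* f : A -> Omega is definable: for some n >= 1, n f takes values in Gamma,
   and on each A cap F_I, n f is either constantly +oo or maps into Z with a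
   definable graph (the extra graph coordinate is variable number m). *)
Definition definable_fun (Z : zmodType) (le : Z -> Z -> Prop) (one : Z)
  (Q : zmodType) (iota : Z -> Q) (m : nat)
  (A : ('I_m -> option Z) -> Prop) (f : ('I_m -> option Z) -> option Q) : Prop :=
  exists n : nat, (0 < n)%N /\
    (forall a, A a -> nmulO n (f a) = None \/ exists z, nmulO n (f a) = Some (iota z)) /\
    forall I : {set 'I_m},
      (forall a, A a -> in_face I a -> nmulO n (f a) = None) \/
      ((forall a, A a -> in_face I a -> exists z, nmulO n (f a) = Some (iota z)) /\
       exists phi : pform Z, forall x z, in_face I x ->
         ((A x /\ nmulO n (f x) = Some (iota z)) <-> peval le one (upd (envx x) m z) phi)).

Definition nonneg (Z : zmodType) (le : Z -> Z -> Prop) (m : nat)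
  (A : ('I_m -> option Z) -> Prop) : Prop :=
  forall x, A x -> forall i, match x i with None => True | Some z => le 0 z end.

(* Main.v *)
Require Import Defs.
From mathcomp Require Import all_boot all_algebra.
From Stdlib Require Import Classical ClassicalEpsilon FunctionalExtensionality.
From mathcomp Require Import zify.
Set Implicit Arguments. Unset Strict Implicit. Unset Printing Implicit Defensive.
Import GRing.Theory.
Local Open Scope ring_scope.

Section ZG.
Variables (Z : zmodType) (le : Z -> Z -> Prop) (one : Z).
Hypothesis HZ : zgroup le one.

Let Hoa := zg_oa HZ.
Lemma lerr x : le x x. Proof. exact: (oa_refl Hoa x). Qed.
Lemma le_tr x y z : le x y -> le y z -> le x z. Proof. exact: (oa_trans Hoa). Qed.
Lemma le_an x y : le x y -> le y x -> x = y. Proof. exact: (oa_anti Hoa). Qed.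
Lemma le_tot x y : le x y \/ le y x. Proof. exact: (oa_total Hoa). Qed.
Lemma le_addr x y z : le x y -> le (x + z) (y + z). Proof. exact: (oa_add Hoa). Qed.
Lemma le_addl x y z : le x y -> le (z + x) (z + y).
Proof. by rewrite ![z + _]addrC; apply: le_addr. Qed.
Lemma le_add a b c d : le a b -> le c d -> le (a + c) (b + d).
Proof. move=> h1 h2; apply: le_tr (le_addr c h1) (le_addl b h2). Qed.
Lemma le_subP x y : le x y <-> le 0 (y - x).
Proof.
split=> h; first by have := le_addr (- x) h; rewrite subrr.
by have := le_addr x h; rewrite add0r subrK.
Qed.
Lemma le_opp x y : le x y -> le (- y) (- x).
Proof. by move=> /le_subP h; apply/le_subP; rewrite opprK addrC. Qed.
Lemma le_oppP x y : le (- y) (- x) <-> le x y.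
Proof. split; last exact: le_opp. by move=> /le_opp; rewrite !opprK. Qed.
Lemma one_ge0 : le 0 one. Proof. exact: (proj1 (zg_one_pos HZ)). Qed.
Lemma one_neq0 : one <> 0. Proof. exact: (proj2 (zg_one_pos HZ)). Qed.
Lemma lt_le1 x y : le x y -> x <> y -> le (x + one) y.
Proof.
move=> /le_subP h hne; apply/le_subP; rewrite opprD addrA.
have hne' : y - x <> 0 by move=> /eqP; rewrite subr_eq0 => /eqP e; exact: hne (esym e).
by have /le_subP := zg_one_min HZ h hne'.
Qed.
Lemma not_le x y : ~ le x y <-> le (y + one) x.
Proof.
split=> h.
  case: (le_tot x y) => hyx; first by exfalso.
  apply: lt_le1 hyx _ => hxy; apply: h; rewrite -hxy; exact: lerr.
move=> hxy; have := le_tr h hxy; rewrite -{2}[y]addr0 => /(le_addl (- y)).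
rewrite !addKr => h1; apply: one_neq0; exact: le_an h1 one_ge0.
Qed.
Lemma le_x1 x : le x (x + one).
Proof. by rewrite -{1}[x]addr0; apply: le_addl; exact: one_ge0. Qed.
Lemma le_pmuln x n : le 0 x -> le 0 (x *+ n).
Proof.
move=> h; elim: n => [|n IH]; first exact: lerr.
by rewrite mulrS -[0]addr0; apply: le_add.
Qed.
Lemma le_muln x y n : le x y -> le (x *+ n) (y *+ n).
Proof. by move=> /le_subP h; apply/le_subP; rewrite -mulrnBl; apply: le_pmuln. Qed.
Lemma le_x_muln x n : le 0 x -> (0 < n)%N -> le x (x *+ n).
Proof.
case: n => // n h _; rewrite mulrSr -{1}[x]add0r; apply: le_addr.
exact: le_pmuln.
Qed.
Lemma tfree (w : Z) n : w *+ n.+1 = 0 -> w = 0.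
Proof.
move=> e; wlog hw : w e / le 0 w.
  move=> W; case: (le_tot 0 w) => h; first exact: W.
  apply/eqP; rewrite -oppr_eq0; apply/eqP; apply: W.
    by rewrite mulNrn e oppr0.
  by move/le_opp: h; rewrite oppr0.
have := le_x_muln hw (isT : (0 < n.+1)%N); rewrite e => h.
exact: le_an h hw.
Qed.
Lemma muln_inj (x y : Z) n : x *+ n.+1 = y *+ n.+1 -> x = y.
Proof. by move=> e; apply/eqP; rewrite -subr_eq0; apply/eqP; apply: (@tfree _ n); rewrite mulrnBl e subrr. Qed.
Lemma le_muln_refl x y n : le (x *+ n.+1) (y *+ n.+1) -> le x y.
Proof.
move=> h; apply: NNPP => /not_le h'.
have h2 : le y x by apply: le_tr h'; exact: le_x1.
have e := le_an h (le_muln n.+1 h2).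
move: h'; rewrite (muln_inj e) => h3.
have := le_tr h3 (lerr y); rewrite -{2}[y]addr0 => /(le_addl (- y)); rewrite !addKr => h1.
exact: one_neq0 (le_an h1 one_ge0).
Qed.

Lemma small_mult (n k : nat) (w : Z) : (0 < k)%N -> (k < n)%N -> one *+ k = w *+ n -> False.
Proof.
move=> k0 kn ed2.
have wpos : le 0 w.
  apply: NNPP => /not_le h.
  have hw : le w 0 := le_tr (le_x1 w) h.
  have : le (w *+ n) 0 by rewrite -(mul0rn _ n); apply: le_muln.
  rewrite -ed2 => h2.
  have h3 : le 0 (one *+ k) by apply: le_pmuln; exact: one_ge0.
  have e0 := le_an h2 h3.
  move: k0 e0; case: k {kn ed2 h2 h3} => // k _ /tfree; exact: one_neq0.
have wne : w <> 0.
  move=> w0; move: ed2; rewrite w0 mul0rn; move: k0; case: k {kn} => // k _ /tfree; exact: one_neq0.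
have h1 := zg_one_min HZ wpos wne.
have h2 : le (one *+ n) (one *+ k) by rewrite ed2; apply: le_muln.
have e3 : one *+ n = one *+ (n - k) + one *+ k by rewrite -mulrnDr subnK // ltnW.
have h4 : le (one *+ (n - k)) 0.
  move: (le_addr (- (one *+ k)) h2); rewrite e3 (addrK (one *+ k)) (subrr (one *+ k)); exact.
have h5 : le 0 (one *+ (n - k)) by apply: le_pmuln; exact: one_ge0.
have e5 := le_an h4 h5.
have : (0 < n - k)%N by rewrite subn_gt0.
move: e5; case: (n - k)%N => [|j] e h0 //; have := tfree e; exact: one_neq0.
Qed.

Lemma zdiv (n : nat) x : (0 < n)%N -> exists q (r : nat), (r < n)%N /\ x = q *+ n + one *+ r.
Proof.
move=> n0; have [r hr] := zg_quot HZ n0.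
have cls : forall y, { i : 'I_n | exists u, y - r i = u *+ n }.
  move=> y; apply: constructive_indefinite_description.
  by have [i [hi _]] := hr y; exists i.
pose g (k : 'I_n) := sval (cls (one *+ k)).
have ginj : injective g.
  move=> i j e.
  have [u hu] := svalP (cls (one *+ i)); have [v hv] := svalP (cls (one *+ j)).
  rewrite -/(g i) in hu; rewrite -/(g j) -e in hv.
  have ed : one *+ i - one *+ j = (u - v) *+ n.
    by rewrite mulrnBl -hu -hv opprB addrA subrK.
  apply/val_inj; case: (ltngtP i j) => // h.
    exfalso; apply: (@small_mult n (j - i) (v - u)); rewrite ?subn_gt0 //.
      by apply: leq_ltn_trans (leq_subr _ _) _.
    rewrite mulrnBr; last exact: ltnW.
    by rewrite -(opprB (one *+ i)) ed -mulNrn opprB.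
  exfalso; apply: (@small_mult n (i - j) (u - v)); rewrite ?subn_gt0 //.
    by apply: leq_ltn_trans (leq_subr _ _) _.
  by rewrite mulrnBr; [exact: ed|exact: ltnW].
have gsurj : forall i, exists k, g k = i.
  move=> i; have [g' _ gK] := injF_bij ginj.
  by exists (g' i); rewrite gK.
have [i [hi _]] := hr x.
have [k gk] := gsurj i.
have [v hv] := svalP (cls (one *+ k)); rewrite -/(g k) gk in hv.
have [u hu] := hi.
exists (u - v), k; split; first exact: ltn_ord.
by rewrite mulrnBl -hu -hv opprB addrA !subrK.
Qed.

Definition env := nat -> Z.

Lemma upd_eq (e : env) i z : upd e i z i = z.
Proof. by rewrite /upd eqxx. Qed.
Lemma upd_neq (e : env) i z j : j != i -> upd e i z j = e j.
Proof. by rewrite /upd => /negbTE ->. Qed.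
Lemma upd_upd (e : env) i z w : upd (upd e i z) i w = upd e i w.
Proof. by apply: functional_extensionality => j; rewrite /upd; case: eqP. Qed.
Lemma upd_comm (e : env) i j z w : i != j -> upd (upd e i z) j w = upd (upd e j w) i z.
Proof.
move=> ne; apply: functional_extensionality => k; rewrite /upd.
case: (eqVneq k j) => hkj; case: (eqVneq k i) => hki //.
by move: ne; rewrite -hki -hkj eqxx.
Qed.
Lemma upd_id (e : env) i : upd e i (e i) = e.
Proof. by apply: functional_extensionality => j; rewrite /upd; case: eqP => // ->. Qed.

Record aff := Aff { af :> env -> Z; afc : nat -> int;
  afP : forall e x z, af (upd e x z) = af (upd e x 0) + z *~ afc x }.

Lemma af0 (F : aff) e x z : afc F x = 0 -> F (upd e x z) = F (upd e x 0).
Proof. by move=> h; rewrite afP h mulr0z addr0. Qed.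

Definition aconst (d : Z) : aff.
Proof. refine (@Aff (fun _ => d) (fun _ => 0) _). by move=> *; rewrite mulr0z addr0. Defined.

Definition avar (i : nat) : aff.
Proof.
refine (@Aff (fun e => e i) (fun x => if x == i then 1 else 0) _).
move=> e x z; case: (eqVneq x i) => [->|ne]; first by rewrite !upd_eq add0r.
by rewrite !upd_neq 1?eq_sym // mulr0z addr0.
Defined.

Definition aadd (F G : aff) : aff.
Proof.
refine (@Aff (fun e => F e + G e) (fun x => afc F x + afc G x) _).
by move=> e x z; rewrite (afP F e x z) (afP G e x z) mulrzDr addrACA.
Defined.

Definition ascale (F : aff) (k : int) : aff.
Proof.
refine (@Aff (fun e => F e *~ k) (fun x => afc F x * k) _).
by move=> e x z; rewrite afP mulrzDl mulrzA.
Defined.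

Definition aopp (F : aff) : aff := ascale F (-1).

Definition asub (x : nat) (G F : aff) : aff.
Proof.
refine (@Aff (fun e => F (upd e x (G e)))
   (fun y => if y == x then afc G x * afc F x else afc F y + afc G y * afc F x) _).
move=> e y z; case: (eqVneq y x) => [->|ne].
  rewrite !upd_upd (afP F e x (G _)) (afP F e x (G (upd e x 0))) (afP G e x z) mulrzDl mulrzA.
  by rewrite addrA.
rewrite (afP G e y z) (afP F (upd e y z) x) (upd_comm _ _ _ ne) (afP F (upd e x 0) y z).
rewrite (afP F (upd e y 0) x) (upd_comm _ _ _ ne) mulrzDl mulrzDr mulrzA.
by rewrite -!addrA; congr (_ + _); rewrite addrC -!addrA; congr (_ + _); rewrite addrC.
Defined.

Lemma asubE x G F e : asub x G F e = F (upd e x (G e)). Proof. by []. Qed.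
Lemma asubc x G F : afc (asub x G F) x = afc G x * afc F x.
Proof. by rewrite /= eqxx. Qed.
Lemma aconstc d x : afc (aconst d) x = 0. Proof. by []. Qed.

Lemma asub_const_c x d F : afc (asub x (aconst d) F) x = 0.
Proof. by rewrite asubc mul0r. Qed.

Definition dvd (n : nat) (x : Z) := exists y, x = y *+ n.+1.

Inductive atom := ALe of aff | ADv of nat & aff | ANd of nat & aff.
Inductive pf := PTr | PFa | PAt of atom | PCj of pf & pf | PDj of pf & pf.

Definition aev (e : env) (a : atom) : Prop :=
  match a with
  | ALe F => le 0 (F e)
  | ADv n F => dvd n (F e)
  | ANd n F => ~ dvd n (F e)
  end.

Fixpoint pev (v : atom -> Prop) (p : pf) : Prop :=
  match p with
  | PTr => True
  | PFa => False
  | PAt a => v a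
  | PCj p q => pev v p /\ pev v q
  | PDj p q => pev v p \/ pev v q
  end.

Definition ev e p := pev (aev e) p.

Fixpoint atoms (p : pf) : list atom :=
  match p with
  | PAt a => cons a nil
  | PCj p q | PDj p q => List.app (atoms p) (atoms q)
  | _ => nil
  end.

Lemma pev_mono (v1 v2 : atom -> Prop) p :
  (forall a, List.In a (atoms p) -> v1 a -> v2 a) -> pev v1 p -> pev v2 p.
Proof.
elim: p => //= [a|p IHp q IHq|p IHp q IHq] h.
- by apply: h; left.
- case=> h1 h2; split; [apply: IHp h1|apply: IHq h2] => a ha; apply: h;
  apply: List.in_or_app; tauto.
- case=> h1; [left; apply: IHp h1|right; apply: IHq h1] => a ha; apply: h;
  apply: List.in_or_app; tauto.
Qed.

Lemma pev_ext (v1 v2 : atom -> Prop) p :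
  (forall a, List.In a (atoms p) -> (v1 a <-> v2 a)) -> (pev v1 p <-> pev v2 p).
Proof.
by move=> h; split; apply: pev_mono => a ha; have := h a ha; tauto.
Qed.

Fixpoint pbind (h : atom -> pf) (p : pf) : pf :=
  match p with
  | PAt a => h a
  | PCj p q => PCj (pbind h p) (pbind h q)
  | PDj p q => PDj (pbind h p) (pbind h q)
  | PTr => PTr
  | PFa => PFa
  end.

Lemma pev_bind v h p : pev v (pbind h p) <-> pev (fun a => pev v (h a)) p.
Proof. by elim: p => //= [p IHp q IHq|p IHp q IHq]; rewrite IHp IHq. Qed.

Definition amap (h : aff -> aff) (a : atom) : atom :=
  match a with
  | ALe F => ALe (h F) | ADv n F => ADv n (h F) | ANd n F => ANd n (h F)
  end.

Definition psub x (G : aff) (p : pf) := pbind (fun a => PAt (amap (asub x G) a)) p.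

Lemma ev_psub e x G p : ev e (psub x G p) <-> ev (upd e x (G e)) p.
Proof. rewrite /ev /psub pev_bind; apply: pev_ext => -[F|n F|n F] _ //=. Qed.

Definition aneg (a : atom) : pf :=
  match a with
  | ALe F => PAt (ALe (aadd (aopp F) (aconst (- one))))
  | ADv n F => PAt (ANd n F)
  | ANd n F => PAt (ADv n F)
  end.

Fixpoint pneg (p : pf) : pf :=
  match p with
  | PTr => PFa | PFa => PTr
  | PAt a => aneg a
  | PCj p q => PDj (pneg p) (pneg q)
  | PDj p q => PCj (pneg p) (pneg q)
  end.

Lemma neg_le0 x : le 0 (- (x + one)) <-> ~ le 0 x.
Proof.
split => h.
  move=> h'; move/le_opp: h; rewrite oppr0 opprK => h.
  have h1 : le one (x + one) by rewrite -{1}[one]add0r; apply: le_addr.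
  have := le_tr h1 h => h2; apply: one_neq0; exact: le_an h2 one_ge0.
by move/not_le: h => /le_opp; rewrite oppr0.
Qed.

Lemma ev_pneg e p : ev e (pneg p) <-> ~ ev e p.
Proof.
rewrite /ev; elim: p => /=.
- tauto.
- tauto.
- case=> [F|n F|n F] /=; last (split; [by move=> h h'|exact: NNPP]); last tauto.
  by rewrite /aopp /= mulrN1z -opprD neg_le0.
- move=> p IHp q IHq; rewrite IHp IHq; split; [tauto|].
  move=> h; apply: NNPP => h'; apply: h; split; apply: NNPP => h''; apply: h'; tauto.
- move=> p IHp q IHq; rewrite IHp IHq; tauto.
Qed.

Fixpoint por (s : list pf) : pf :=
  match s with nil => PFa | cons p s => PDj p (por s) end.
Lemma ev_por e s : ev e (por s) <-> exists p, List.In p s /\ ev e p.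
Proof.
elim: s => /= [|p s IH]; first by split => // [[p []]].
rewrite /ev /= -/(ev e p) -/(ev e (por s)) IH; split.
  by case=> [h|[q [hq h]]]; [exists p; split; [left|]|exists q; split; [right|]].
by case=> q [[<-|hq] h]; [left|right; exists q].
Qed.

Lemma zmul_comm (z : Z) (L : nat) (c : int) : (z *+ L) *~ c = (z *~ c) *+ L.
Proof. by rewrite !pmulrn -!mulrzA mulrC. Qed.

Lemma le0_mulnP (A : Z) k : (0 < k)%N -> le 0 (A *+ k) <-> le 0 A.
Proof.
case: k => // k _; split => h; last exact: le_pmuln.
by apply: (le_muln_refl (n:=k)); rewrite mul0rn.
Qed.

Lemma dvd_mulnP n (A : Z) L : (0 < L)%N -> dvd (n.+1 * L).-1 (A *+ L) <-> dvd n A.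
Proof.
case: L => // L _; rewrite /dvd prednK ?muln_gt0 //; split => [[y hy]|[y ->]].
  by exists y; apply: (@muln_inj _ _ L); rewrite hy mulrnA.
by exists y; rewrite -mulrnA.
Qed.

Lemma dvd_shift n (A B : Z) : dvd n A <-> dvd n (A + B *+ n.+1).
Proof.
split => [[y ->]|[y h]]; first by exists (y + B); rewrite mulrnDl.
by exists (y - B); rewrite mulrnBl -h addrK.
Qed.

Lemma aff_shift (F : aff) e x z w : F (upd e x (z + w)) = F (upd e x z) + w *~ afc F x.
Proof. by rewrite (afP F e x (z + w)) (afP F e x z) mulrzDl addrA. Qed.

Lemma dvd_period n (F : aff) e x z w D : (n.+1 %| D)%N ->
  dvd n (F (upd e x z)) <-> dvd n (F (upd e x (z + w *+ D))).
Proof.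
move=> hD; rewrite aff_shift zmul_comm -(divnK hD) mulrnA.
exact: dvd_shift.
Qed.

Definition lcml (s : list nat) : nat := foldr lcmn 1%N s.
Lemma lcml_gt0 s : (forall k, List.In k s -> (0 < k)%N) -> (0 < lcml s)%N.
Proof.
elim: s => //= k s IH h; rewrite lcmn_gt0 (h k (or_introl erefl)) IH //.
by move=> k' hk'; apply: h; right.
Qed.
Lemma dvd_lcml k s : List.In k s -> (k %| lcml s)%N.
Proof.
elim: s => //= k' s IH [<-|h]; first exact: dvdn_lcml.
exact: dvdn_trans (IH h) (dvdn_lcmr _ _).
Qed.

Section Norm.
Variable x : nat.

Definition ca (F : aff) : nat := if afc F x == 0 then 1%N else `|afc F x|%N.
Definition leLs (p : pf) : list nat :=
  List.map (fun a => match a with ALe F => ca F | _ => 1%N end) (atoms p).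
Definition Lc p := lcml (leLs p).

Lemma Lc_gt0 p : (0 < Lc p)%N.
Proof.
apply: lcml_gt0 => k /List.in_map_iff [a [<- _]].
case: a => // F; rewrite /ca; case: eqP => // /eqP h.
by rewrite absz_gt0.
Qed.

Lemma ca_dvd p F : List.In (ALe F) (atoms p) -> (ca F %| Lc p)%N.
Proof. by move=> h; apply: dvd_lcml; apply/List.in_map_iff; exists (ALe F). Qed.

Definition natm (L : nat) (a : atom) : atom :=
  match a with
  | ALe F => if afc F x == 0 then ALe F else
      ALe (aadd (ascale (asub x (aconst 0) F) (Posz (L %/ `|afc F x|%N)))
                (ascale (avar x) (sgz (afc F x))))
  | ADv n F => ADv (n.+1 * L).-1
      (aadd (ascale (asub x (aconst 0) F) (Posz L)) (ascale (avar x) (afc F x)))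
  | ANd n F => ANd (n.+1 * L).-1
      (aadd (ascale (asub x (aconst 0) F) (Posz L)) (ascale (avar x) (afc F x)))
  end.

Definition nrm (p : pf) : pf :=
  PCj (PAt (ADv (Lc p).-1 (avar x))) (pbind (fun a => PAt (natm (Lc p) a)) p).

Lemma natm_val (F : aff) e z (L : nat) (c : int) :
  (aadd (ascale (asub x (aconst 0) F) (Posz L)) (ascale (avar x) c))
     (upd e x (z *+ L)) = (F (upd e x 0) + z *~ c) *+ L.
Proof.
rewrite /= !upd_upd upd_eq -pmulrn zmul_comm mulrnDl //.
Qed.

Lemma natm_atom p e z a : List.In a (atoms p) ->
  (aev (upd e x z) a <-> aev (upd e x (z *+ Lc p)) (natm (Lc p) a)).
Proof.
have L0 := Lc_gt0 p.
case: a => [F|n F|n F] ha /=.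
- case: eqP => [c0|/eqP c0]; first by rewrite /= !(af0 e _ c0).
  have hd := ca_dvd ha; rewrite /ca (negbTE c0) in hd.
  set k := (Lc p %/ `|afc F x|)%N.
  have hk : (`|afc F x| * k)%N = Lc p by rewrite mulnC divnK.
  have k0 : (0 < k)%N by move: L0; rewrite -hk muln_gt0 => /andP [].
  rewrite /= !upd_upd upd_eq -pmulrn afP.
  have -> : (z *+ Lc p) *~ sgz (afc F x) = (z *~ afc F x) *+ k.
    rewrite -hk !pmulrn -!mulrzA; congr (_ *~ _).
    by rewrite PoszM [LHS]mulrC mulrA -intEsg.
  by rewrite -mulrnDl le0_mulnP.
- move: (natm_val F e z (Lc p) (afc F x)) => /= ->.
  by rewrite dvd_mulnP // -afP.
- move: (natm_val F e z (Lc p) (afc F x)) => /= ->.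
  by rewrite dvd_mulnP // -afP.
Qed.

Lemma nrm_ev p e z : ev (upd e x z) p <-> ev (upd e x (z *+ Lc p)) (nrm p).
Proof.
rewrite /ev /nrm /= pev_bind /=; split.
  move=> h; split; first by exists z => /=; rewrite upd_eq prednK ?Lc_gt0.
  by move: h; apply: pev_mono => a ha /(natm_atom e z ha).
case=> _; apply: pev_mono => a ha /(natm_atom e z ha); done.
Qed.

Lemma nrm_ex p e y : ev (upd e x y) (nrm p) -> exists z, y = z *+ Lc p.
Proof.
move=> [[z hz] _]; move: hz => /=; rewrite upd_eq prednK ?Lc_gt0 // => ->.
by exists z.
Qed.

Lemma nrm_exE p e : (exists z, ev (upd e x z) p) <-> (exists y, ev (upd e x y) (nrm p)).
Proof.
split=> [[z hz]|[y hy]]; first by exists (z *+ Lc p); rewrite -nrm_ev.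
have [z ez] := nrm_ex hy; exists z; rewrite nrm_ev -ez //.
Qed.

Definition normal (q : pf) := forall F, List.In (ALe F) (atoms q) ->
  afc F x = 0 \/ afc F x = 1 \/ afc F x = -1.

Lemma atoms_bind (h : atom -> pf) p a :
  List.In a (atoms (pbind h p)) -> exists b, List.In b (atoms p) /\ List.In a (atoms (h b)).
Proof.
elim: p => //= [b|p IHp q IHq|p IHp q IHq] ha.
- by exists b; split => //; left.
- case: (List.in_app_or _ _ _ ha) => ha';
  [have [b [hb hb']] := IHp ha'|have [b [hb hb']] := IHq ha'];
  exists b; split => //; apply: List.in_or_app; tauto.
- case: (List.in_app_or _ _ _ ha) => ha';
  [have [b [hb hb']] := IHp ha'|have [b [hb hb']] := IHq ha'];
  exists b; split => //; apply: List.in_or_app; tauto.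
Qed.

Lemma natc (F : aff) (k s : int) :
  afc (aadd (ascale (asub x (aconst 0) F) k) (ascale (avar x) s)) x = s.
Proof.
by rewrite /= !eqxx !mul0r add0r mul1r.
Qed.

Lemma nrm_normal p : normal (nrm p).
Proof.
move=> F /= [//|/atoms_bind [b [_ /=]]] [] // hb.
case: b hb => [G|n G|n G] //=; case: eqP => /= [c0 [] <- //|/eqP c0 [] <-]; first by left.
rewrite natc.
case: (Num.Theory.ltrgt0P (afc G x)) c0 => h c0;
  first (by right; left; apply: gtr0_sgz);
  first (by right; right; apply: ltr0_sgz);
  by [].
Qed.

End Norm.

Lemma list_min (s : list Z) (P : Z -> Prop) : (exists c, List.In c s /\ P c) ->
  exists c, List.In c s /\ P c /\ forall d, List.In d s -> P d -> le c d.
Proof.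
elim: s => [[c [[] _]]|c s IH] h.
case: (classic (exists d, List.In d s /\ P d)) => [/IH [c' [hc' [pc' hm]]]|hn].
  case: (classic (P c)) => pc.
    case: (le_tot c c') => hcc.
      exists c; split; [by left|split => //] => d [<-|hd] pd; first exact: lerr.
      exact: le_tr hcc (hm d hd pd).
    exists c'; split; [by right|split => //] => d [<-|hd] pd //; exact: hm.
  exists c'; split; [by right|split => //] => d [<-|hd] pd //; exact: hm.
have pc : P c.
  by case: h => d [[<-|hd] pd] //; exfalso; apply: hn; exists d.
exists c; split; [by left|split => //] => d [<-|hd] pd; first exact: lerr.
by exfalso; apply: hn; exists d.
Qed.

Lemma list_max (A : Type) (val : A -> Z) (s : list A) (P : A -> Prop) :
  (exists c, List.In c s /\ P c) ->
  exists c, List.In c s /\ P c /\ forall d, List.In d s -> P d -> le (val d) (val c).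
Proof.
elim: s => [[c [[] _]]|c s IH] h.
case: (classic (exists d, List.In d s /\ P d)) => [/IH [c' [hc' [pc' hm]]]|hn].
  case: (classic (P c)) => pc.
    case: (le_tot (val c) (val c')) => hcc.
      exists c'; split; [by right|split => //] => d [<-|hd] pd //; exact: hm.
    exists c; split; [by left|split => //] => d [<-|hd] pd; first exact: lerr.
    exact: le_tr (hm d hd pd) hcc.
  exists c'; split; [by right|split => //] => d [<-|hd] pd //; exact: hm.
have pc : P c.
  by case: h => d [[<-|hd] pd] //; exfalso; apply: hn; exists d.
exists c; split; [by left|split => //] => d [<-|hd] pd; first exact: lerr.
by exfalso; apply: hn; exists d.
Qed.

Lemma list_lb (s : list Z) b : exists m, le m b /\ forall u, List.In u s -> le m u.
Proof.
elim: s => [|c s [m [hb hm]]]; first by exists b; split => //; exact: lerr.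
case: (le_tot m c) => h.
  by exists m; split => // u [<-|hu] //; exact: hm.
exists c; split; first exact: le_tr h hb.
move=> u [<-|hu]; [exact: lerr|exact: le_tr h (hm u hu)].
Qed.

(* ---------- Cooper's elimination ---------- *)
Section Coop.
Variable x : nat.

Definition lowof (F : aff) : aff := aopp (asub x (aconst 0) F).
Definition upof (F : aff) : aff := asub x (aconst 0) F.
Definition lowers (q : pf) : list aff := List.flat_map (fun a =>
  match a with ALe F => if afc F x == 1 then cons (lowof F) nil else nil | _ => nil end) (atoms q).
Definition uppers (q : pf) : list aff := List.flat_map (fun a =>
  match a with ALe F => if afc F x == -1 then cons (upof F) nil else nil | _ => nil end) (atoms q).
Definition Dq (q : pf) : nat := lcml (List.map (fun a =>
  match a with ADv n _ | ANd n _ => n.+1 | _ => 1%N end) (atoms q)).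
Definition minfa (a : atom) : pf :=
  match a with
  | ALe F => if afc F x == 1 then PFa else if afc F x == -1 then PTr else PAt a
  | _ => PAt a end.
Definition minf (q : pf) := pbind minfa q.

Lemma lowof_val F e : lowof F e = - F (upd e x 0).
Proof. by rewrite /= mulrN1z. Qed.
Lemma upof_val F e : upof F e = F (upd e x 0).
Proof. by []. Qed.

Lemma low_atom F e z : afc F x = 1 -> (aev (upd e x z) (ALe F) <-> le (lowof F e) z).
Proof.
move=> c1; rewrite lowof_val /= afP c1 mulr1z (le_subP (- _) z) opprK addrC; done.
Qed.
Lemma up_atom F e z : afc F x = -1 -> (aev (upd e x z) (ALe F) <-> le z (upof F e)).
Proof.
move=> c1; rewrite upof_val /= afP c1 mulrN1z (le_subP z); done.
Qed.

Lemma In_lowers q F : List.In (ALe F) (atoms q) -> afc F x = 1 -> List.In (lowof F) (lowers q).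
Proof. by move=> h c1; apply/List.in_flat_map; exists (ALe F); rewrite c1 eqxx; split => //; left. Qed.
Lemma In_uppers q F : List.In (ALe F) (atoms q) -> afc F x = -1 -> List.In (upof F) (uppers q).
Proof. by move=> h c1; apply/List.in_flat_map; exists (ALe F); rewrite c1 eqxx; split => //; left. Qed.
Lemma lowers_In q l : List.In l (lowers q) ->
  exists F, List.In (ALe F) (atoms q) /\ afc F x = 1 /\ l = lowof F.
Proof.
case/List.in_flat_map => -[F|n F|n F] [ha] //; case: eqP => // c1 [] // <-.
by exists F.
Qed.

Lemma Dq_gt0 q : (0 < Dq q)%N.
Proof. by apply: lcml_gt0 => k /List.in_map_iff [[F|n F|n F] [<-]]. Qed.
Lemma dvd_Dq q n F : List.In (ADv n F) (atoms q) \/ List.In (ANd n F) (atoms q) ->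
  (n.+1 %| Dq q)%N.
Proof.
by case=> h; apply: dvd_lcml; apply/List.in_map_iff; [exists (ADv n F)|exists (ANd n F)].
Qed.

Section Q.
Variables (q : pf) (hq : normal x q) (e : env).

Lemma minf_of_S z : (forall l, List.In l (lowers q) -> ~ le (l e) z) ->
  ev (upd e x z) q -> ev (upd e x z) (minf q).
Proof.
move=> hl; rewrite /ev /minf pev_bind; apply: pev_mono => -[F|n F|n F] ha //.
rewrite /minfa; case: eqP => [c1|_]; last by case: eqP.
by move/(low_atom e z c1) => h; exfalso; exact: hl _ (In_lowers ha c1) h.
Qed.

Lemma S_of_minf z : (forall u, List.In u (uppers q) -> le z (u e)) ->
  ev (upd e x z) (minf q) -> ev (upd e x z) q.
Proof.
move=> hu; rewrite /ev /minf pev_bind; apply: pev_mono => -[F|n F|n F] ha //.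
rewrite /minfa; case: eqP => [c1|_] //; case: eqP => [c1 _|_] //.
by apply/(up_atom e z c1); apply: hu; apply: In_uppers.
Qed.

Lemma minf_period z w : ev (upd e x z) (minf q) <-> ev (upd e x (z + w *+ Dq q)) (minf q).
Proof.
rewrite /ev /minf !pev_bind; apply: pev_ext => -[F|n F|n F] ha.
- rewrite /minfa; case: eqP => [//|c1]; case: eqP => [//|c2].
  have c0 : afc F x = 0 by case: (hq ha) => [|[]].
  by rewrite /= !(af0 _ _ c0).
- by apply: dvd_period; apply: (dvd_Dq (F:=F)); left.
- by rewrite /= -dvd_period //; apply: (dvd_Dq (F:=F)); right.
Qed.

Lemma unbounded z : ev (upd e x z) (minf q) ->
  forall b, exists z', le z' b /\ ev (upd e x z') q.
Proof.
move=> hz b.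
have [m0 [hmb hm]] := list_lb (List.map (fun u : aff => u e) (uppers q)) b.
have hup : forall z', le z' m0 -> ev (upd e x z') (minf q) -> ev (upd e x z') q.
  move=> z' hz'; apply: S_of_minf => u hu; apply: le_tr hz' (hm _ _).
  by apply/List.in_map_iff; exists u.
case: (classic (le z m0)) => hzm.
  by exists z; split; [exact: le_tr hzm hmb|exact: hup].
have w0 : le 0 (z - m0).
  by move/not_le: hzm => h; apply/(le_subP m0 z); apply: le_tr (le_x1 m0) h.
have key : le (z + (- (z - m0)) *+ Dq q) m0.
  have h1 := le_x_muln w0 (Dq_gt0 q).
  have h2 := le_addl z (le_opp h1).
  by move: h2; rewrite mulNrn opprB (addrC z (m0 - z)) subrK.
exists (z + (- (z - m0)) *+ Dq q); split; first exact: le_tr key hmb.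
by apply: hup => //; rewrite -minf_period.
Qed.

Lemma cooper_core z : ev (upd e x z) q ->
  ev (upd e x z) (minf q) \/
  exists l j, List.In l (lowers q) /\ (j < Dq q)%N /\ le (l e + one *+ j) z /\
              ev (upd e x (l e + one *+ j)) q.
Proof.
move=> hz.
case: (classic (exists l, List.In l (lowers q) /\ le (l e) z)) => [hex|hn]; last first.
  by left; apply: minf_of_S => // l hl h; apply: hn; exists l.
right.
have [l0 [hl0 [pl0 hmax]]] := list_max (fun l : aff => l e) hex.
set t0 := l0 e in pl0 hmax *.
have [q0 [j [hj ez]]] := zdiv (z - t0) (Dq_gt0 q).
have q0pos : le 0 q0.
  apply: NNPP => /not_le h.
  have h1 : le q0 (- one) by have := le_addr (- one) h; rewrite add0r addrK.
  have h2 : le (q0 *+ Dq q) (- one *+ Dq q) := le_muln _ h1.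
  have h3 : le (z - t0) (- (one *+ (Dq q - j))).
    rewrite ez (mulrnBr one (ltnW hj)) opprB addrC.
    by apply: le_addl; rewrite -mulNrn; exact: h2.
  have h4 : le 0 (- (one *+ (Dq q - j))) := le_tr (proj1 (le_subP t0 z) pl0) h3.
  have h5 : le 0 (one *+ (Dq q - j)) by apply: le_pmuln; exact: one_ge0.
  move/le_opp: h4; rewrite oppr0 opprK => h4.
  have e5 := le_an h4 h5.
  have : (0 < Dq q - j)%N by rewrite subn_gt0.
  move: e5; case: (Dq q - j)%N => [|k] e6 h0 //; have := tfree e6; exact: one_neq0.
have ez' : z = t0 + one *+ j + q0 *+ Dq q.
  by rewrite -addrA [one *+ j + _]addrC -ez addrC subrK.
exists l0, j; split => //; split => //.
have yz : le (t0 + one *+ j) z.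
  rewrite {1}ez' -{1}[t0 + one *+ j]addr0; apply: le_addl; apply: le_pmuln; exact: q0pos.
split => //.
have ey : t0 + one *+ j = z + (- q0) *+ Dq q by rewrite ez' mulNrn addrK.
move: hz; rewrite /ev; apply: pev_mono => -[F|n F|n F] ha.
- case: (hq ha) => [c0|[c1|c1]].
  + by rewrite /= !(af0 _ _ c0).
  + move/(low_atom e z c1) => h; apply/(low_atom e _ c1).
    apply: le_tr (hmax _ (In_lowers ha c1) h) _.
    rewrite -{1}[t0]addr0; apply: le_addl; apply: le_pmuln; exact: one_ge0.
  + move/(up_atom e z c1) => h; apply/(up_atom e _ c1); exact: le_tr yz h.
- by rewrite /= ey -dvd_period //; apply: (dvd_Dq (F:=F)); left.
- by rewrite /= ey -dvd_period //; apply: (dvd_Dq (F:=F)); right.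
Qed.

End Q.
End Coop.

Lemma in_seq0 j D : List.In j (List.seq 0 D) <-> (j < D)%N.
Proof.
rewrite List.in_seq; split => [[_ /ltP] //|/ltP h]; split => //.
exact: PeanoNat.Nat.le_0_l.
Qed.

Definition cands x q := List.flat_map (fun l => List.map (fun j =>
  psub x (aadd l (aconst (one *+ j))) q) (List.seq 0 (Dq q))) (lowers x q).
Definition minfs x q := List.map (fun j => psub x (aconst (one *+ j)) (minf x q))
  (List.seq 0 (Dq q)).
Definition cooper x q := PDj (por (minfs x q)) (por (cands x q)).

Lemma cooper_ok x q e : normal x q -> (ev e (cooper x q) <-> exists z, ev (upd e x z) q).
Proof.
move=> hq; split.
  case=> [/ev_por [p [/List.in_map_iff [j [<- _]]]]|/ev_por [p [/List.in_flat_map [l [hl]]]]].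
    by rewrite ev_psub => /(unbounded hq) /(_ 0) [z' [_ h]]; exists z'.
  by case/List.in_map_iff => j [<- _]; rewrite ev_psub => h; eexists; exact: h.
move=> [z hz]; case: (cooper_core hq hz) => [hm|[l [j [hl [hj [_ h]]]]]].
  have [q0 [j [hj ez]]] := zdiv z (Dq_gt0 q).
  left; apply/ev_por; exists (psub x (aconst (one *+ j)) (minf x q)); split.
    by apply/List.in_map_iff; exists j; split => //; apply/in_seq0.
  rewrite ev_psub /=.
  have -> : one *+ j = z + (- q0) *+ Dq q by rewrite ez mulNrn addrAC subrr add0r.
  by rewrite -minf_period.
right; apply/ev_por; exists (psub x (aadd l (aconst (one *+ j))) q); split.
  apply/List.in_flat_map; exists l; split => //.
  by apply/List.in_map_iff; exists j; split => //; apply/in_seq0.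
by rewrite ev_psub.
Qed.

Definition qe x p := cooper x (nrm x p).
Lemma qe_ok x p e : ev e (qe x p) <-> exists z, ev (upd e x z) p.
Proof. rewrite cooper_ok; [symmetry; exact: nrm_exE|exact: nrm_normal]. Qed.

Lemma min_principle x p e : (exists z, ev (upd e x z) p) ->
  (exists b, forall z, ev (upd e x z) p -> le b z) ->
  exists z0, ev (upd e x z0) p /\ forall z, ev (upd e x z) p -> le z0 z.
Proof.
move=> [z1 hz1] [b hb].
set q := nrm x p; set L := Lc x p.
have hq : normal x q := @nrm_normal x p.
have L0 : (0 < L)%N := @Lc_gt0 x p.
have hb' : forall y, ev (upd e x y) q -> le (b *+ L) y.
  move=> y hy; have [z ez] := nrm_ex hy.
  rewrite ez; apply: le_muln; apply: hb; rewrite nrm_ev -/q -/L -ez //.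
set cv := List.flat_map (fun l : aff => List.map (fun j => l e + one *+ j)
   (List.seq 0 (Dq q))) (lowers x q).
have core : forall y, ev (upd e x y) q -> exists c, List.In c cv /\ le c y /\ ev (upd e x c) q.
  move=> y hy; case: (cooper_core hq hy) => [hm|[l [j [hl [hj [hle h]]]]]].
    exfalso; have [z' [hz' h']] := unbounded hq hm (b *+ L - one).
    have := le_tr (hb' _ h') hz' => h2.
    have h3 := le_addr one h2; rewrite subrK in h3.
    by move/not_le: h3; apply; exact: lerr.
  exists (l e + one *+ j); split => //.
  apply/List.in_flat_map; exists l; split => //.
  by apply/List.in_map_iff; exists j; split => //; apply/in_seq0.
have hy1 : ev (upd e x (z1 *+ L)) q by rewrite -nrm_ev.
have [c [hc [_ pc]]] := core _ hy1.
have [c0 [_ [pc0 hmin]]] := list_min (P := fun c => ev (upd e x c) q) (ex_intro _ c (conj hc pc)).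
have [z0 ez0] := nrm_ex pc0.
exists z0; split; first by rewrite nrm_ev -/q -/L -ez0.
move=> z hz.
have hzq : ev (upd e x (z *+ L)) q by rewrite -nrm_ev.
have [c' [hc' [hle pc']]] := core _ hzq.
have := le_tr (hmin _ hc' pc') hle; rewrite ez0.
have [L' eL] : exists L', L = L'.+1 by exists L.-1; rewrite prednK.
rewrite -/L eL => h; exact: le_muln_refl h.
Qed.

Definition Def (P : env -> Prop) := exists p, forall e, P e <-> ev e p.

Lemma Def_ext P Q : (forall e, P e <-> Q e) -> Def P -> Def Q.
Proof. by move=> h [p hp]; exists p => e; rewrite -h. Qed.
Lemma Def_true : Def (fun _ => True). Proof. by exists PTr. Qed.
Lemma Def_false : Def (fun _ => False). Proof. by exists PFa. Qed.
Lemma Def_and P Q : Def P -> Def Q -> Def (fun e => P e /\ Q e).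
Proof. by move=> [p hp] [q hq]; exists (PCj p q) => e; rewrite hp hq. Qed.
Lemma Def_or P Q : Def P -> Def Q -> Def (fun e => P e \/ Q e).
Proof. by move=> [p hp] [q hq]; exists (PDj p q) => e; rewrite hp hq. Qed.
Lemma Def_not P : Def P -> Def (fun e => ~ P e).
Proof. by move=> [p hp]; exists (pneg p) => e; rewrite ev_pneg hp. Qed.
Lemma Def_imp P Q : Def P -> Def Q -> Def (fun e => P e -> Q e).
Proof.
move=> hP hQ; apply: Def_ext (Def_or (Def_not hP) hQ) => e.
split; [move=> [h|h] //|]; move=> h; case: (classic (P e)); tauto.
Qed.
Lemma Def_ex x P : Def P -> Def (fun e => exists z, P (upd e x z)).
Proof.
move=> [p hp]; exists (qe x p) => e; rewrite qe_ok.
by split => -[z h]; exists z; apply/hp.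
Qed.
Lemma Def_all x P : Def P -> Def (fun e => forall z, P (upd e x z)).
Proof.
move=> hP; apply: Def_ext (Def_not (Def_ex x (Def_not hP))) => e.
split => h; first by move=> z; apply: NNPP => hz; apply: h; exists z.
by move=> [z hz]; exact: hz (h z).
Qed.
Lemma Def_subst x (G : aff) P : Def P -> Def (fun e => P (upd e x (G e))).
Proof. by move=> [p hp]; exists (psub x G p) => e; rewrite ev_psub. Qed.
Lemma Def_le (F G : aff) : Def (fun e => le (F e) (G e)).
Proof.
exists (PAt (ALe (aadd G (aopp F)))) => e; rewrite /ev /=.
by rewrite mulrN1z; exact: le_subP.
Qed.
Lemma Def_eq (F G : aff) : Def (fun e => F e = G e).
Proof.
apply: Def_ext (Def_and (Def_le F G) (Def_le G F)) => e.
by split => [[h1 h2]|->]; [exact: le_an|split; exact: lerr].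
Qed.
Lemma Def_min x P e : Def P -> (exists z, P (upd e x z)) ->
  (exists b, forall z, P (upd e x z) -> le b z) ->
  exists z0, P (upd e x z0) /\ forall z, P (upd e x z) -> le z0 z.
Proof.
move=> [p hp] [z hz] [b hb].
have h1 : exists z, ev (upd e x z) p by exists z; apply/hp.
have h2 : exists b, forall z, ev (upd e x z) p -> le b z by exists b => z' /hp; apply: hb.
have [z0 [h3 h4]] := min_principle h1 h2.
by exists z0; split; [apply/hp|move=> z' /hp; apply: h4].
Qed.

Fixpoint trm (t : pterm Z) : aff :=
  match t with
  | PVar i => avar i
  | PConst c => aconst c
  | PZero => aconst 0
  | POne => aconst one
  | PAdd t u => aadd (trm t) (trm u)
  end.
Lemma trmE t e : trm t e = teval one e t.
Proof. by elim: t => //= t IHt u IHu; rewrite IHt IHu. Qed.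

Lemma Def_peval (phi : pform Z) : Def (fun e => peval le one e phi).
Proof.
elim: phi => /=.
- by move=> t u; apply: Def_ext (Def_eq (trm t) (trm u)) => e; rewrite !trmE.
- by move=> t u; apply: Def_ext (Def_le (trm t) (trm u)) => e; rewrite !trmE.
- move=> [|n] t u.
    apply: Def_ext (Def_eq (trm t) (trm u)) => e; rewrite !trmE; split.
      by move=> ->; exists 0; rewrite subrr.
    by move=> [y]; rewrite mulr0n => /eqP; rewrite subr_eq0 => /eqP.
  exists (PAt (ADv n (aadd (trm t) (aopp (trm u))))) => e; rewrite /ev /=.
  by rewrite mulrN1z !trmE.
- by move=> p hp; exact: (Def_not hp).
- by move=> p hp q hq; exact: (Def_and hp hq).
- by move=> p hp q hq; exact: (Def_or hp hq).
- by move=> i p hp; exact: (Def_ex i hp).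
- by move=> i p hp; exact: (Def_all i hp).
Qed.

Fixpoint tv (t : pterm Z) : nat :=
  match t with PVar i => i.+1 | PAdd t u => maxn (tv t) (tv u) | _ => 0%N end.
Fixpoint pv (phi : pform Z) : nat :=
  match phi with
  | PEq t u | PLe t u | PCong _ t u => maxn (tv t) (tv u)
  | PNot p | PEx _ p | PAll _ p => pv p
  | PAnd p q | POr p q => maxn (pv p) (pv q)
  end.

Lemma teval_coin (e1 e2 : env) t : (forall j, (j < tv t)%N -> e1 j = e2 j) ->
  teval one e1 t = teval one e2 t.
Proof.
elim: t => //= [i|t IHt u IHu] h; first exact: h.
rewrite IHt ?IHu // => j hj; apply: h; rewrite leq_max hj ?orbT //.
Qed.

Lemma peval_coin phi : forall (e1 e2 : env), (forall j, (j < pv phi)%N -> e1 j = e2 j) ->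
  (peval le one e1 phi <-> peval le one e2 phi).
Proof.
have hm : forall a b j, (j < a)%N -> (j < maxn a b)%N by move=> a b j h; rewrite leq_max h.
have hm' : forall a b j, (j < b)%N -> (j < maxn a b)%N by move=> a b j h; rewrite leq_max h orbT.
elim: phi => /=.
- by move=> t u e1 e2 h; rewrite (teval_coin (t:=t) (e2:=e2)) ?(teval_coin (t:=u) (e2:=e2)) //;
    move=> j hj; apply: h; [exact: hm'|exact: hm].
- by move=> t u e1 e2 h; rewrite (teval_coin (t:=t) (e2:=e2)) ?(teval_coin (t:=u) (e2:=e2)) //;
    move=> j hj; apply: h; [exact: hm'|exact: hm].
- by move=> n t u e1 e2 h; rewrite (teval_coin (t:=t) (e2:=e2)) ?(teval_coin (t:=u) (e2:=e2)) //;
    move=> j hj; apply: h; [exact: hm'|exact: hm].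
- by move=> p IH e1 e2 h; rewrite (IH e1 e2).
- by move=> p IHp q IHq e1 e2 h; rewrite (IHp e1 e2) ?(IHq e1 e2) // => j hj; apply: h;
    [exact: hm'|exact: hm].
- by move=> p IHp q IHq e1 e2 h; rewrite (IHp e1 e2) ?(IHq e1 e2) // => j hj; apply: h;
    [exact: hm'|exact: hm].
- move=> i p IH e1 e2 h; split=> -[z hz]; exists z; move: hz; rewrite (IH _ (upd e2 i z)) //;
    move=> j hj; rewrite /upd; case: eqP => // _; exact: h.
- move=> i p IH e1 e2 h; split=> hz z; move: (hz z); rewrite (IH _ (upd e2 i z)) //;
    move=> j hj; rewrite /upd; case: eqP => // _; exact: h.
Qed.

Definition zk (b : nat -> bool) (K : nat) (e : env) : env :=
  fun j => if (j < K)%N && b j then 0 else e j.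

Lemma Def_zk P b K : Def P -> Def (fun e => P (zk b K e)).
Proof.
move=> hP; elim: K => [|K IH].
  by apply: Def_ext hP => e; have -> : zk b 0 e = e by apply: functional_extensionality.
case hb: (b K).
  apply: Def_ext (Def_subst K (aconst 0) IH) => e /=.
  have -> // : zk b K (upd e K 0) = zk b K.+1 e.
  apply: functional_extensionality => j; rewrite /zk /upd ltnS.
  by case: (ltngtP j K) => [h|h|->] /=; rewrite ?(ltnW h) ?(ltn_eqF h) ?(gtn_eqF h) ?[(j <= K)%N]leqNgt ?h ?ltnn ?leqnn ?eqxx ?hb.
apply: Def_ext IH => e.
have -> // : zk b K e = zk b K.+1 e.
apply: functional_extensionality => j; rewrite /zk ltnS.
by case: (ltngtP j K) => //= ->; rewrite hb.
Qed.

Lemma Def_const (P : Prop) : Def (fun _ => P).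
Proof.
case: (classic P) => h; [apply: Def_ext Def_true|apply: Def_ext Def_false]; tauto.
Qed.

Lemma Def_exl (T : Type) (s : list T) (P : T -> env -> Prop) :
  (forall t, Def (P t)) -> Def (fun e => exists t, List.In t s /\ P t e).
Proof.
move=> hP; elim: s => [|t s IH].
  by apply: Def_ext Def_false => e; split => // -[t [[]]].
apply: Def_ext (Def_or (hP t) IH) => e /=; split.
  by case=> [h|[t' [h1 h2]]]; [exists t; split; [left|]|exists t'; split; [right|]].
by case=> t' [[<-|h1] h2]; [left|right; exists t'].
Qed.

Lemma Def_alll (T : Type) (s : list T) (P : T -> env -> Prop) :
  (forall t, Def (P t)) -> Def (fun e => forall t, List.In t s -> P t e).
Proof.
move=> hP; elim: s => [|t s IH]; first by apply: Def_ext Def_true => e; split.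
apply: Def_ext (Def_and (hP t) IH) => e /=; split.
  by case=> h1 h2 t' [<-|h]; [|apply: h2].
by move=> h; split; [apply: h; left|move=> t' h'; apply: h; right].
Qed.

Definition ovr (a e : env) (K : nat) : env := fun j => if (j < K)%N then a j else e j.

Lemma Def_exs P K : Def P -> Def (fun e => exists a, P (ovr a e K)).
Proof.
move=> hP; elim: K => [|K IH].
  apply: Def_ext hP => e; split => [h|[a]]; last by have -> : ovr a e 0 = e by [].
  by exists e.
apply: Def_ext (Def_ex K IH) => e; split.
  move=> [z [a h]]; exists (upd a K z); move: h.
  have -> // : ovr a (upd e K z) K = ovr (upd a K z) e K.+1.
  apply: functional_extensionality => j; rewrite /ovr /upd ltnS.
  by case: (ltngtP j K).
move=> [a h]; exists (a K), a; move: h.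
have -> // : ovr a e K.+1 = ovr a (upd e K (a K)) K.
apply: functional_extensionality => j; rewrite /ovr /upd ltnS.
by case: (ltngtP j K) => // ->.
Qed.

Lemma InE (T : eqType) (x : T) (s : seq T) : List.In x s <-> x \in s.
Proof.
elim: s => //= y s IH; rewrite in_cons; split.
  by case=> [->|h]; [rewrite eqxx|rewrite (proj1 IH h) orbT].
by case/orP => [/eqP ->|h]; [left|right; apply/IH].
Qed.

Section QG.
Variables (Q : zmodType) (leQ : Q -> Q -> Prop) (HQ : oagroup leQ).
Lemma qrefl x : leQ x x. Proof. exact: (oa_refl HQ x). Qed.
Lemma qtr x y z : leQ x y -> leQ y z -> leQ x z. Proof. exact: (oa_trans HQ). Qed.
Lemma qan x y : leQ x y -> leQ y x -> x = y. Proof. exact: (oa_anti HQ). Qed.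
Lemma qtot x y : leQ x y \/ leQ y x. Proof. exact: (oa_total HQ). Qed.
Lemma qaddr x y z : leQ x y -> leQ (x + z) (y + z). Proof. exact: (oa_add HQ). Qed.
Lemma qaddl x y z : leQ x y -> leQ (z + x) (z + y).
Proof. by rewrite ![z + _]addrC; apply: qaddr. Qed.
Lemma qadd a b c d : leQ a b -> leQ c d -> leQ (a + c) (b + d).
Proof. move=> h1 h2; apply: qtr (qaddr c h1) (qaddl b h2). Qed.
Lemma q_pmuln x k : leQ 0 x -> leQ 0 (x *+ k).
Proof.
move=> h; elim: k => [|k IH]; first exact: qrefl.
by rewrite mulrS -[0]addr0; apply: qadd.
Qed.
Lemma q_subP x y : leQ x y <-> leQ 0 (y - x).
Proof.
split=> h; first by have := qaddr (- x) h; rewrite subrr.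
by have := qaddr x h; rewrite add0r subrK.
Qed.
Lemma q_muln x y k : leQ x y -> leQ (x *+ k) (y *+ k).
Proof. by move=> /q_subP h; apply/q_subP; rewrite -mulrnBl; apply: q_pmuln. Qed.
Lemma q_x_muln x k : leQ 0 x -> (0 < k)%N -> leQ x (x *+ k).
Proof.
case: k => // k h _; rewrite mulrSr -{1}[x]add0r; apply: qaddr.
exact: q_pmuln.
Qed.
Lemma q_opp x y : leQ x y -> leQ (- y) (- x).
Proof. by move=> /q_subP h; apply/q_subP; rewrite opprK addrC. Qed.
Lemma q_tfree (w : Q) k : w *+ k.+1 = 0 -> w = 0.
Proof.
move=> e; wlog hw : w e / leQ 0 w.
  move=> W; case: (qtot 0 w) => h; first exact: W.
  apply/eqP; rewrite -oppr_eq0; apply/eqP; apply: W.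
    by rewrite mulNrn e oppr0.
  by move/q_opp: h; rewrite oppr0.
have := q_x_muln hw (isT : (0 < k.+1)%N); rewrite e => h.
exact: qan h hw.
Qed.
Lemma q_muln_refl x y k : leQ (x *+ k.+1) (y *+ k.+1) -> leQ x y.
Proof.
move=> h; apply: NNPP => hn.
have hyx : leQ y x by case: (qtot x y).
have e := qan h (q_muln k.+1 hyx).
have : x = y.
  apply/eqP; rewrite -subr_eq0; apply/eqP; apply: (@q_tfree _ k).
  by rewrite mulrnBl e subrr.
by move=> exy; apply: hn; rewrite exy; exact: qrefl.
Qed.
End QG.

Section Main.
Variables (Q : zmodType) (leQ : Q -> Q -> Prop) (iota : Z -> Q) (m : nat).
Variables (A : ('I_m -> option Z) -> Prop) (f : ('I_m -> option Z) -> option Q).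
Hypothesis Hd : divhull le leQ iota.
Hypothesis Hnn : nonneg le A.
Variable n : nat.
Hypothesis n0 : (0 < n)%N.
Hypothesis hfaces : forall I : {set 'I_m},
      (forall a, A a -> in_face I a -> nmulO n (f a) = None) \/
      ((forall a, A a -> in_face I a -> exists z, nmulO n (f a) = Some (iota z)) /\
       exists phi : pform Z, forall x z, in_face I x ->
         ((A x /\ nmulO n (f x) = Some (iota z)) <-> peval le one (upd (envx x) m z) phi)).

Let HQ := dh_oa Hd.

Definition pt (I : {set 'I_m}) (e : env) : 'I_m -> option Z :=
  fun i => if i \in I then Some (e (val i)) else None.

Lemma pt_face I e : in_face I (pt I e).
Proof. by move=> i; rewrite /pt; case: (i \in I). Qed.

Definition fval a z := A a /\ nmulO n (f a) = Some (iota z).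

Lemma Def_graph I : Def (fun e => fval (pt I e) (e m)).
Proof.
case: (hfaces I) => [h1|[_ [phi hphi]]].
  apply: Def_ext Def_false => e; split => // -[hA].
  by rewrite (h1 _ hA (pt_face I e)).
pose K := maxn (pv phi) m.+1.
pose b := fun j : nat => match @insub nat (fun k => (k < m)%N) 'I_m j with
                         | Some i => i \notin I | None => j != m end.
apply: Def_ext (Def_zk b K (Def_peval phi)) => e.
rewrite /fval (hphi _ _ (pt_face I e)); apply: peval_coin => j hj.
have hjK : (j < K)%N by rewrite leq_max hj.
rewrite /zk hjK /= /b /upd /envx.
case: (eqVneq j m) => [->|ne].
  by rewrite insubF ?ltnn.
case: insubP => [i hi ei|hn] /=.
  by rewrite /pt; case: (i \in I) => //=; rewrite ei.
by [].
Qed.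

Lemma Def_exA (R : ('I_m -> option Z) -> Z -> env -> Prop) :
  (forall I, Def (fun e => R (pt I e) (e m) e)) ->
  (forall a z e e', (forall j, (m < j)%N -> e j = e' j) -> R a z e -> R a z e') ->
  Def (fun e => exists a z, R a z e).
Proof.
move=> hR hinv.
have D : Def (fun e => exists I, List.In I (enum [set: {set 'I_m}]) /\
   exists a', (fun e => R (pt I e) (e m) e) (ovr a' e m.+1)).
  apply: (@Def_exl _ (enum [set: {set 'I_m}])
    (fun I e => exists a', (fun e => R (pt I e) (e m) e) (ovr a' e m.+1))) => I.
  exact: (Def_exs m.+1 (hR I)).
apply: Def_ext D => e; split.
  move=> [I [_ [a' h]]]; exists (pt I (ovr a' e m.+1)), (ovr a' e m.+1 m).
  apply: hinv h => j hj; rewrite /ovr ltnS leqNgt hj //.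
move=> [a [z h]].
exists [set i | isSome (a i)]; split; first by apply/InE; rewrite mem_enum in_setT.
pose a' := fun j : nat => if j == m then z else
  match @insub nat (fun k => (k < m)%N) 'I_m j with Some i => odflt 0 (a i) | None => 0 end.
exists a'.
have -> : pt [set i | isSome (a i)] (ovr a' e m.+1) = a.
  apply: functional_extensionality => i; rewrite /pt inE /ovr ltnS (ltnW (ltn_ord i)) /a'.
  rewrite (ltn_eqF (ltn_ord i)) (insubT (fun k => (k < m)%N) (ltn_ord i)) /=.
  have -> : Sub (val i) (ltn_ord i) = i by apply: val_inj.
  by case: (a i).
have -> : ovr a' e m.+1 m = z by rewrite /ovr ltnSn /a' eqxx.
apply: hinv h => j hj; rewrite /ovr ltnS leqNgt hj //.
Qed.

Definition cns (o : option (option Z)) (b : Z) (ai : option Z) : Prop :=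
  match o with
  | Some (Some c) => ai = Some c
  | Some None => match ai with None => True | Some d => le (b + one) d end
  | None => True
  end.

Definition Cst (pc : 'I_m -> option (option Z)) (b t : Z) a :=
  A a /\ (exists z, nmulO n (f a) = Some (iota z) /\ le z t) /\ forall i, cns (pc i) b (a i).

Definition Good pc := forall b t, exists a, Cst pc b t a.

Lemma cns_mono o b b' ai : le b' b -> cns o b ai -> cns o b' ai.
Proof.
case: o => // -[c|] // h; case: ai => // d h'; apply: le_tr h'; exact: le_addr.
Qed.

Lemma Cst_mono pc b t b' t' a : le b' b -> le t t' -> Cst pc b t a -> Cst pc b' t' a.
Proof.
move=> hb ht [hA [[z [hz hzt]] hc]]; split => //; split.
  by exists z; split => //; exact: le_tr hzt ht.
by move=> i; apply: cns_mono hb (hc i).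
Qed.

Lemma le_max2 (x y : Z) : exists w, le x w /\ le y w.
Proof. by case: (le_tot x y) => h; [exists y|exists x]; split => //; exact: lerr. Qed.
Lemma le_min2 (x y : Z) : exists w, le w x /\ le w y.
Proof. by case: (le_tot x y) => h; [exists x|exists y]; split => //; exact: lerr. Qed.

Definition vb := m.+1.
Definition vt := m.+2.
Definition vc := m.+3.

Lemma vcb : (vc == vb) = false. Proof. by apply/negbTE/eqP; rewrite /vc /vb; lia. Qed.
Lemma vct : (vc == vt) = false. Proof. by apply/negbTE/eqP; rewrite /vc /vt; lia. Qed.
Lemma vtb : (vt == vb) = false. Proof. by apply/negbTE/eqP; rewrite /vt /vb; lia. Qed.
Lemma updc (e : env) t b : upd (upd e vt t) vb b vc = e vc.
Proof. by rewrite /upd vcb vct. Qed.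
Lemma updt (e : env) t b : upd (upd e vt t) vb b vt = t.
Proof. by rewrite /upd vtb eqxx. Qed.
Lemma updb (e : env) t b : upd (upd e vt t) vb b vb = b.
Proof. by rewrite /upd eqxx. Qed.

Lemma Def_cns o i I : Def (fun e => cns o (e vb) (pt I e i)).
Proof.
rewrite /pt; case: (i \in I); last first.
  by case: o => [[c|]|]; [apply: Def_ext Def_false|apply: Def_ext Def_true|apply: Def_ext Def_true] => e.
case: o => [[c|]|]; last exact: Def_true.
  apply: Def_ext (Def_eq (avar (val i)) (aconst c)) => e /=.
  by split => [->|[]].
exact: (Def_le (aadd (avar vb) (aconst one)) (avar (val i))).
Qed.

Definition upd_pc (pc : 'I_m -> option (option Z)) k o : 'I_m -> option (option Z) :=
  fun i => if i == k then Some o else pc i.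

Lemma Def_S pc k : Def (fun e => forall t b, exists a,
   Cst pc b t a /\ exists d, a k = Some d /\ le d (e vc)).
Proof.
pose R a z e := fval a z /\ le z (e vt) /\ (forall i, cns (pc i) (e vb) (a i)) /\
                exists d, a k = Some d /\ le d (e vc).
have DR : Def (fun e => exists a z, R a z e).
  apply: Def_exA.
    move=> I; apply: Def_and; first exact: Def_graph.
    apply: Def_and; first exact: (Def_le (avar m) (avar vt)).
    apply: Def_and.
      apply: Def_ext (@Def_alll _ (enum 'I_m) (fun i e => cns (pc i) (e vb) (pt I e i))
        (fun i => Def_cns (pc i) i I)) => e.
      by split => h i; [apply: h; apply/InE; rewrite mem_enum|move=> _; apply: h].
    rewrite /pt; case: (k \in I); last by apply: Def_ext Def_false => e; split => // -[d []].
    apply: Def_ext (Def_le (avar (val k)) (avar vc)) => e /=.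
    by split => [h|[d [[<-] h]]] //; exists (e k).
  move=> a z e e' he [h1 [h2 [h3 h4]]].
  have hb : e vb = e' vb by apply: he.
  have ht : e vt = e' vt by apply: he; rewrite /vt ltnS.
  have hc : e vc = e' vc by apply: he; rewrite /vc ltnS ltnW.
  by rewrite /R -hb -ht -hc; split => //; split => //; split.
apply: Def_ext (Def_all vt (Def_all vb DR)) => e; split.
  move=> h t b; have [a [z [[hA hz] [hzt [hcn hd]]]]] := h t b.
  exists a; split; last by move: hd; rewrite updc.
  split => //; split; first by exists z; split => //; move: hzt; rewrite updt.
  by move=> i; move: (hcn i); rewrite updb.
move=> h t b; have [a [[hA [[z [hz hzt]] hcn]] hd]] := h t b.
exists a, z; split; first by split.
split; first by rewrite updt.
split; first by move=> i; rewrite updb.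
by rewrite updc.
Qed.

Lemma Cst_upd pc k o b t a : Cst pc b t a -> cns (Some o) b (a k) ->
  Cst (upd_pc pc k o) b t a.
Proof.
move=> [hA [hz hc]] hk; split => //; split => // i; rewrite /upd_pc.
by case: (eqVneq i k) => [->|_].
Qed.

Lemma S_step pc k : Good pc -> exists o, Good (upd_pc pc k o).
Proof.
move=> hG.
pose S c := forall t b, exists a, Cst pc b t a /\ exists d, a k = Some d /\ le d c.
have DS : Def (fun e => S (e vc)) := Def_S pc k.
have neg : forall c, ~ S c -> exists t1 b1, forall a, Cst pc b1 t1 a ->
    forall d, a k = Some d -> ~ le d c.
  move=> c hnot; apply: NNPP => H; apply: hnot => t1 b1; apply: NNPP => H2; apply: H.
  by exists t1, b1 => a ha d hd hle; apply: H2; exists a; split => //; exists d.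
case: (classic (exists c, S c)) => [[c hc]|hn].
  have hb0 : forall z, S z -> le 0 z.
    move=> z hz; have [a [[hA _] [d [hd hle]]]] := hz 0 0.
    have := Hnn hA k; rewrite hd => h0; exact: le_tr h0 hle.
  have e1 : exists z, S (upd (fun _ => 0) vc z vc) by exists c; rewrite upd_eq.
  have e2 : exists b, forall z, S (upd (fun _ => 0) vc z vc) -> le b z.
    by exists 0 => z; rewrite upd_eq; exact: hb0.
  have [z0 [h1 h2]] := @Def_min vc _ (fun _ => 0) DS e1 e2.
  move: h1 h2; rewrite upd_eq => h1 h2.
  have hmin : forall c', S c' -> le z0 c'.
    by move=> c' hc'; apply: h2; rewrite upd_eq.
  exists (Some z0) => b t.
  have hnot : ~ S (z0 - one).
    move=> hs; have := hmin _ hs => hle.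
    have := le_addr one hle; rewrite subrK => /not_le; apply; exact: lerr.
  have [t1 [b1 hn1]] := neg _ hnot.
  have [bm [hbm hb1m]] := le_max2 b b1.
  have [tm [htm ht1m]] := le_min2 t t1.
  have [a [ha [d [hd hle]]]] := h1 tm bm.
  exists a; apply: Cst_upd; first exact: Cst_mono hbm htm ha.
  rewrite /cns hd; congr Some. refine (le_an hle _).
  have := hn1 a (Cst_mono hb1m ht1m ha) d hd; move/not_le; rewrite subrK //.
exists None => b t.
have hnot : ~ S b by move=> hs; apply: hn; exists b.
have [t1 [b1 hn1]] := neg _ hnot.
have [bm [hbm hb1m]] := le_max2 b b1.
have [tm [htm ht1m]] := le_min2 t t1.
have [a ha] := hG bm tm.
exists a; apply: Cst_upd; first exact: Cst_mono hbm htm ha.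
rewrite /cns; case hak: (a k) => [d|] //.
by have := hn1 a (Cst_mono hb1m ht1m ha) d hak; move/not_le.
Qed.

Lemma all_steps : Good (fun _ => None) -> exists pc, Good pc /\ forall i, pc i <> None.
Proof.
move=> h0.
have : forall s : seq 'I_m, exists pc, Good pc /\ forall i, i \in s -> pc i <> None.
  elim => [|k s [pc [hG hs]]]; first by exists (fun _ => None); split.
  have [o hG'] := S_step k hG.
  exists (upd_pc pc k o); split => // i; rewrite in_cons /upd_pc.
  by case: (eqVneq i k) => //= _ /hs.
move=> /(_ (enum 'I_m)) [pc [hG hs]]; exists pc; split => // i; apply: hs.
by rewrite mem_enum.
Qed.

Lemma iota0 : iota 0 = 0.
Proof.
have h := dh_add Hd 0 0; rewrite addr0 in h.
by apply: (addrI (iota 0)); rewrite addr0 -h.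
Qed.
Lemma iotaN u : iota (- u) = - iota u.
Proof.
apply/eqP; rewrite -subr_eq0 opprK; apply/eqP.
by rewrite -(dh_add Hd) addNr iota0.
Qed.
Lemma iota_le x y : le x y -> leQ (iota x) (iota y).
Proof. exact: (proj1 (dh_le Hd x y)). Qed.
Lemma iota_le' x y : leQ (iota x) (iota y) -> le x y.
Proof. exact: (proj2 (dh_le Hd x y)). Qed.

Lemma ub_iota r : exists u, leQ r (iota u).
Proof.
have [N [N0 [u hu]]] := dh_tors Hd r.
case: (qtot HQ r 0) => h.
  by exists 0; rewrite iota0.
by exists u; rewrite -hu; apply: q_x_muln.
Qed.
Lemma lb_iota w : exists t, leQ (iota t) w.
Proof.
have [u hu] := ub_iota (- w); exists (- u); rewrite iotaN.
by have := q_opp HQ hu; rewrite opprK.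
Qed.
Lemma ray_bound r : exists b, forall d, le (b + one) d -> ltrel leQ r (iota d).
Proof.
have [u hu] := ub_iota r; exists u => d hd.
have hud : le u d := le_tr (le_x1 u) hd.
split; first exact: (qtr HQ hu (iota_le hud)).
move=> e; have : le d u by apply: iota_le'; rewrite -e.
move=> hdu; have := le_tr hd hdu => /not_le; apply; exact: lerr.
Qed.
Lemma delta_pos : leQ 0 (iota one) /\ iota one <> 0.
Proof.
split; first by rewrite -iota0; apply: iota_le; exact: one_ge0.
move=> e; apply: one_neq0; apply: le_an.
  by apply: iota_le'; rewrite e iota0; exact: qrefl.
exact: one_ge0.
Qed.

Section Final.
Variable g : ('I_m -> option Q) -> option Q.
Hypothesis hg1 : forall x, A x -> g (embO iota x) = f x.
Hypothesis hg2 : forall y, in_closure leQ iota A y ->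
       forall V : basic Q, in_basic leQ V (g y) ->
       exists U : 'I_m -> basic Q, in_box leQ U y /\
         forall y', in_closure leQ iota A y' -> in_box leQ U y' ->
           in_basic leQ V (g y').

Lemma final_contra pc : Good pc -> (forall i, pc i <> None) -> False.
Proof.
move=> hG hall.
pose y := embO iota (fun i => odflt None (pc i)).
have box : forall U, in_box leQ U y ->
    exists b, forall t a, Cst pc b t a -> in_box leQ U (embO iota a).
  move=> U hU.
  pose P i b := forall t a, Cst pc b t a -> in_basic leQ (U i) (embO iota a i).
  have Pmono : forall i b b', le b b' -> P i b -> P i b'.
    move=> i b b' hbb h t a ha; apply: h t a (Cst_mono hbb (lerr t) ha).
  have Pex : forall i, exists b, P i b.
    move=> i; have := hU i; rewrite /y /embO.
    case hpi: (pc i) => [[c|]|] //= hUi.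
    - exists 0 => t a [_ [_ hc]]; have := hc i; rewrite hpi /= /embO => ->; exact: hUi.
    - have [r hr] : exists r, U i = BRay r by move: hUi; case: (U i) => // r _; exists r.
      have [b hb] := ray_bound r; exists b => t a [_ [_ hc]].
      rewrite /embO hr; have := hc i; rewrite hpi /=; case: (a i) => //= d hd; exact: hb.
    - by exfalso; exact: hall i hpi.
  have : forall s : seq 'I_m, exists b, forall i, i \in s -> P i b.
    elim => [|i s [b hb]]; first by exists 0.
    have [b' hb'] := Pex i.
    have [bm [h1 h2]] := le_max2 b b'.
    exists bm => j; rewrite in_cons; case/orP => [/eqP ->|hj].
      exact: Pmono h2 hb'.
    exact: Pmono h1 (hb j hj).
  move=> /(_ (enum 'I_m)) [b hb]; exists b => t a ha i.
  by apply: (hb i _ t a ha); rewrite mem_enum.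
have hcl : in_closure leQ iota A y.
  move=> U hU; have [b hb] := box U hU.
  have [a ha] := hG b 0; exists a; split; [by case: ha|exact: hb _ _ ha].
pose dl := iota one.
have [d0 dne] := delta_pos.
pose V := match g y with Some qv => BInt (qv - dl) (qv + dl) | None => BRay 0 end.
pose r0 := match g y with Some qv => qv - dl | None => 0 end.
have hV : in_basic leQ V (g y).
  rewrite /V; case: (g y) => [qv|] //=; split; split.
  - have := qaddl HQ qv (q_opp HQ d0); rewrite oppr0 addr0; exact.
  - move=> e; apply: dne; apply/eqP; rewrite -oppr_eq0; apply/eqP.
    by apply: (addrI qv); rewrite addr0.
  - have := qaddl HQ qv d0; rewrite addr0; exact.
  - move=> e; apply: dne; apply: (addrI qv); rewrite addr0; exact: (esym e).
have hV' : forall s, in_basic leQ V (Some s) -> ltrel leQ r0 s.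
  by rewrite /V /r0; case: (g y) => [qv|] //= s [].
have [U [hUy hU]] := hg2 hcl hV.
have [b hb] := box U hUy.
have [t ht] := lb_iota (r0 *+ n).
have [a ha] := hG b t.
have hbox := hb t a ha.
case: ha => hA [[z [hz hzt]] _].
have hcla : in_closure leQ iota A (embO iota a) by move=> U' hU'; exists a.
have := hU _ hcla hbox; rewrite hg1 //.
move: hz; case: (f a) => [s|] //= [] hs /hV' [hr0 hne].
apply: hne; apply: (qan HQ hr0).
have h1 : leQ (s *+ n) (r0 *+ n).
  by rewrite hs; exact: (qtr HQ (iota_le hzt) ht).
by move: n0 h1; case: (n) => // n' _; exact: (q_muln_refl HQ).
Qed.

Lemma main_result : (exists a, A a) ->
  (forall a, A a -> nmulO n (f a) = None \/ exists z, nmulO n (f a) = Some (iota z)) ->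
  exists a, A a /\ forall b, A b -> leO leQ (f a) (f b).
Proof.
move=> [a0 ha0] hval.
case: (classic (exists a, A a /\ f a <> None)) => [[a1 [hA1 hf1]]|hn]; last first.
  exists a0; split => // b hb.
  have -> : f b = None by apply: NNPP => h; apply: hn; exists b.
  by case: (f a0).
pose Vs z := exists a, fval a z.
have DV : Def (fun e => Vs (e vc)).
  have D := @Def_exA (fun a z e => fval a z /\ z = e vc)
    (fun I => Def_and (Def_graph I) (Def_eq (avar m) (avar vc))).
  apply: Def_ext (D _) => [e|a z e e' he [h1 h2]].
    split => [[a [z [h1 <-]]]|[a h]]; first by exists a.
    by exists a, (e vc).
  by split => //; rewrite h2; apply: he; rewrite /vc; lia.
have [z1 hz1] : exists z1, Vs z1.
  case: (hval a1 hA1) => [|[z hz]]; last by exists z; exists a1.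
  by move: hf1; case: (f a1).
have hbd : exists b, forall z, Vs z -> le b z.
  apply: NNPP => hnb.
  have hG : Good (fun _ => None).
    move=> b t; have : ~ (forall z, Vs z -> le t z) by move=> h; apply: hnb; exists t.
    move=> h; have [z [[a [hA hfa]] hzt]] : exists z, Vs z /\ ~ le t z.
      by apply: NNPP => H; apply: h => z hz; apply: NNPP => H2; apply: H; exists z.
    exists a; split => //; split => //.
    exists z; split => //; move/not_le: hzt => h'; exact: le_tr (le_x1 z) h'.
  have [pc [hGp hall]] := all_steps hG.
  exact: final_contra hGp hall.
have e1 : exists z, Vs (upd (fun _ => 0) vc z vc) by exists z1; rewrite upd_eq.
have e2 : exists b, forall z, Vs (upd (fun _ => 0) vc z vc) -> le b z.
  by have [b hb] := hbd; exists b => z; rewrite upd_eq; apply: hb.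
have [z0 [h1 h2]] := @Def_min vc _ (fun _ => 0) DV e1 e2.
move: h1 h2; rewrite upd_eq => -[a [hA hfa]] h2.
exists a; split => // b hb.
case hfb: (f b) => [s|]; last by case: (f a).
have [zb hzb] : exists zb, nmulO n (f b) = Some (iota zb).
  by case: (hval b hb) => [|//]; rewrite hfb.
have hle : le z0 zb by apply: h2; rewrite upd_eq; exists b.
move: hfa hzb; rewrite hfb; case: (f a) => [s0|] //= [] e0 [] eb.
have h3 : leQ (s0 *+ n) (s *+ n) by rewrite e0 eb; exact: iota_le.
by move: n0 h3; case: (n) => // n' _; exact: (q_muln_refl HQ).
Qed.
End Final.
End Main.
End ZG.

Theorem lemma2p10 (Z : zmodType) (leZ : Z -> Z -> Prop) (one : Z)
  (Q : zmodType) (leQ : Q -> Q -> Prop) (iota : Z -> Q)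
  (m : nat) (A : ('I_m -> option Z) -> Prop) (f : ('I_m -> option Z) -> option Q) :
  zgroup leZ one ->
  divhull leZ leQ iota ->
  (exists a, A a) ->
  nonneg leZ A ->
  definable_set leZ one A ->
  definable_fun leZ one iota A f ->
  largely_continuous leQ iota A f ->
  exists a, A a /\ forall b, A b -> leO leQ (f a) (f b).
Proof.
move=> HZ Hd hne hnn _ [n [n0 [hval hfaces]]] [g [hg1 hg2]].
exact: (main_result HZ Hd hnn n0 hfaces hg1 hg2 hne hval).
Qed.
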